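(* Let $p$ be an odd prime and let $\alpha\ge 1$, $\beta\ge 2$ be integers. Then the dihedral group $D_{2p^{\alpha}}\cong ZM(p^{\alpha},2,p^{\alpha}-1)$ of order $2p^\alpha$ and the dicyclic group $Dic_{4p^{\beta}}\cong ZM(p^{\beta},4,p^{\beta}-1)$ of order $4p^\beta$ are not $\psi$-divisible.
   Context: For a finite group $G$, $\psi(G)=\sum_{x\in G} o(x)$ denotes the sum of the orders of all elements of $G$. A finite group $G$ is called $\psi$-divisible if $\psi(H)$ divides $\psi(G)$ for every subgroup $H$ of $G$. For positive integers $m,n,r$ with $\gcd(m,n)=\gcd(m,r-1)=1$ and $r^n\equiv 1\pmod m$, $ZM(m,n,r)=\langle a,b \mid a^m=b^n=1,\ b^{-1}ab=a^r\rangle$. *)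

(* Defs.v *)
From mathcomp Require Import all_boot all_fingroup.
Set Implicit Arguments.
Unset Strict Implicit.
Unset Printing Implicit Defensive.
Local Open Scope group_scope.

Definition psi (gT : finGroupType) (G : {set gT}) : nat := (\sum_(x in G) #[x])%N.

Definition psi_divisible (gT : finGroupType) (G : {group gT}) : Prop :=
  forall H : {group gT}, H \subset G -> psi H %| psi G.

(* Main.v *)
Require Import Defs.
From mathcomp Require Import all_boot all_fingroup all_solvable zify.
Local Open Scope group_scope.

Section Gen.
Variables (gT : finGroupType) (G : {group gT}) (n k : nat) (x y : gT).
Hypotheses (n_gt0 : (0 < n)%N) (k_gt0 : (0 < k)%N) (defG : <[x]> <*> <[y]> = G)
  (xn : x ^+ n = 1) (yk : y ^+ k = 1) (xyN : x ^ y \in <[x]>) (cardG : (n * k <= #|G|)%N).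

Let h (t : 'I_n * 'I_k) := x ^+ t.1 * y ^+ t.2.

Lemma GM : G :=: <[x]> * <[y]>.
Proof. by rewrite -defG (norm_joinEr (G:=<[x]>%G) (H:=<[y]>%G)) // norms_cycle. Qed.

Lemma imh : [set h t | t in setT] = G.
Proof.
apply/eqP; rewrite eqEsubset; apply/andP; split.
  apply/subsetP => _ /imsetP[t _ ->]; rewrite GM; apply: mem_mulg; apply: mem_cycle.
apply/subsetP => g; rewrite GM => /mulsgP[a b /cycleP[i ->] /cycleP[j ->] ->].
apply/imsetP; exists (Ordinal (ltn_pmod i n_gt0), Ordinal (ltn_pmod j k_gt0)) => //=.
by rewrite /h /= !expg_mod.
Qed.

Lemma hinj : {in setT &, injective h}.
Proof.
apply/imset_injP; rewrite imh cardsT card_prod !card_ord eqn_leq cardG andbT.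
by have := leq_imset_card h setT; rewrite imh cardsT card_prod !card_ord.
Qed.

Lemma psiG : psi G = (\sum_(i < n) \sum_(j < k) #[x ^+ i * y ^+ j])%N.
Proof.
rewrite /psi -imh big_imset /=; last exact hinj.
rewrite pair_big /=; apply: eq_bigl => t; by rewrite inE.
Qed.

Lemma xneq i : (0 < i < n)%N -> x ^+ i != 1.
Proof.
case/andP => i0 ilt; apply/eqP => e.
have := hinj (Ordinal ilt, Ordinal k_gt0) (Ordinal n_gt0, Ordinal k_gt0) (in_setT _) (in_setT _).
rewrite /h /= e !expg0 !mulg1 => /(_ erefl) [] ei; by rewrite ei in i0.
Qed.

Lemma psiX : psi <[x]> = (\sum_(i < n) #[x ^+ i])%N.
Proof.
have injx : {in setT &, injective (fun i : 'I_n => x ^+ i)}.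
  move=> i j _ _ e.
  have := hinj (i, Ordinal k_gt0) (j, Ordinal k_gt0) (in_setT _) (in_setT _).
  by rewrite /h /= !expg0 !mulg1 => /(_ e) [].
have -> : <[x]> = [set x ^+ (i : 'I_n) | i in [set: 'I_n]] :> {set gT}.
  apply/eqP; rewrite eqEsubset; apply/andP; split; apply/subsetP => g.
    case/cycleP => i ->; apply/imsetP; exists (Ordinal (ltn_pmod i n_gt0)); first by rewrite inE.
    by rewrite /= expg_mod.
  by case/imsetP => i _ ->; apply: mem_cycle.
rewrite /psi big_imset /=; last exact injx.
by apply: eq_bigl => t; rewrite !inE.
Qed.

Lemma hneq i j : (i < n)%N -> (j < k)%N -> (0 < i)%N || (0 < j)%N -> x ^+ i * y ^+ j != 1.
Proof.
move=> ilt jlt ij; apply/eqP => e.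
have := hinj (Ordinal ilt, Ordinal jlt) (Ordinal n_gt0, Ordinal k_gt0) (in_setT _) (in_setT _).
rewrite /h /= e !expg0 !mulg1 => /(_ erefl) [] ei ej; by rewrite ei ej in ij.
Qed.
End Gen.
Arguments psiG {gT G n k x y}.
Arguments psiX {gT G n k x y}.
Arguments hneq {gT G n k x y}.

Lemma ord2 (gT : finGroupType) (g : gT) : g ^+ 2 = 1 -> g != 1 -> #[g] = 2%N.
Proof.
move=> g2 g1; have d : (#[g] %| 2)%N by rewrite order_dvdn g2.
rewrite -order_eq1 in g1; move: d g1 (order_gt0 g).
by case: #[g] => [|[|[|m]]].
Qed.

Lemma ord4 (gT : finGroupType) (g : gT) : g ^+ 2 != 1 -> g ^+ 4 = 1 -> #[g] = 4%N.
Proof.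
move=> g2 g4; have d : (#[g] %| 4)%N by rewrite order_dvdn g4.
have nd : ~~ (#[g] %| 2)%N by rewrite order_dvdn.
move: d nd (order_gt0 g).
by case: #[g] => [|[|[|[|[|m]]]]].
Qed.

Lemma sq_inv (gT : finGroupType) (a b : gT) : a ^ b = a^-1 -> (a * b) ^+ 2 = b ^+ 2.
Proof.
move=> ab.
have ba : b * a = a^-1 * b by rewrite [RHS]conjgC conjVg ab invgK.
by rewrite expgS expg1 mulgA -(mulgA a b a) ba mulgA mulgV mul1g expgS expg1.
Qed.

Lemma Sprops (gT : finGroupType) (x : gT) (p a n : nat) : prime p -> n = (p ^ a)%N ->
  x ^+ n = 1 -> (forall i, (0 < i < n)%N -> x ^+ i != 1) ->
  coprime (\sum_(i < n) #[x ^+ i]) p /\ (1 + (n - 1) * p <= \sum_(i < n) #[x ^+ i])%N.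
Proof.
move=> pp dn xn xne.
have n0 : (0 < n)%N by rewrite dn expn_gt0 prime_gt0.
have term : forall i : 'I_n.-1, (p %| #[x ^+ (bump 0 i)])%N.
  move=> i; have lt : (0 < bump 0 i < n)%N.
    have := ltn_ord i; rewrite /bump /=; lia.
  have /(dvdn_pfactor _ _ pp) [m mle dm] : (#[x ^+ bump 0 i] %| p ^ a)%N.
    by rewrite order_dvdn -expgnAC -dn xn expg1n.
  have := xne _ lt; rewrite -order_eq1 dm; case: m {mle} dm => [|m] _; first by rewrite expn0.
  by move=> _; rewrite expnS dvdn_mulr.
move: (term); rewrite -(prednK n0) => term'.
rewrite big_ord_recl expg0 order1.
split.
  rewrite coprime_sym prime_coprime // dvdn_addl; last by apply: dvdn_sum => i _; exact: term.
  by rewrite dvdn1; apply/eqP => p1; rewrite p1 in pp.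
rewrite leq_add2l.
have : (\sum_(i < n.-1) p <= \sum_(i < n.-1) #[x ^+ bump 0 i])%N.
  apply: leq_sum => i _; apply: dvdn_leq; last exact: term'.
  by rewrite order_gt0.
by rewrite sum_nat_const card_ord subn1.
Qed.


Lemma conv (rT : finGroupType) (H : {group rT}) (n m : nat) : (0 < n)%N ->
  H \homg Grp (x : y : x ^+ n, y ^+ m, x ^ y = x^-1) ->
  H \homg Grp (x : y : x ^+ n, y ^+ m, x ^ y = x ^+ (n - 1)).
Proof.
move=> n0 /existsP[[x y]] /= /eqP[dH xn ym xy]; apply/existsP; exists (x, y).
rewrite /= !xpair_eqE dH xn ym xy !eqxx /= eq_invg_mul -expgS subn1 prednK //.
by rewrite xn.
Qed.

Lemma invx (gT : finGroupType) (x y : gT) n : (0 < n)%N -> x ^+ n = 1 ->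
  x ^ y = x ^+ (n - 1) -> forall i, (x ^+ i) ^ y = (x ^+ i)^-1.
Proof.
move=> n0 xn xy i; rewrite conjXg xy -expgVn; congr (_ ^+ _).
apply/eqP; rewrite eq_sym eq_invg_mul -expgS subn1 prednK //.
by rewrite xn.
Qed.

Theorem corollary2p5 (p alpha beta : nat) :
  prime p -> odd p -> (1 <= alpha)%N -> (2 <= beta)%N ->
  (forall (gT : finGroupType) (G : {group gT}),
     G \isog Grp (a : b : (a ^+ (p ^ alpha), b ^+ 2, a ^ b = a ^+ (p ^ alpha - 1))) ->
     ~ psi_divisible G) /\
  (forall (gT : finGroupType) (G : {group gT}),
     G \isog Grp (a : b : (a ^+ (p ^ beta), b ^+ 4, a ^ b = a ^+ (p ^ beta - 1))) ->
     ~ psi_divisible G).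
Proof.
move=> pp op a1 b2.
have p3 : (2 < p)%N by move: (prime_gt1 pp) op; case: (p) => [|[|[|q]]].
split => gT G isoG psiD.
- set n := (p ^ alpha)%N in isoG.
  have n3 : (2 < n)%N.
    by apply: (leq_trans p3); rewrite -{1}(expn1 p) leq_exp2l // prime_gt1.
  have n0 : (0 < n)%N by lia.
  have n1 : (1 < n)%N by lia.
  have homED := @conv _ _ n 2 n0 (isoGrp_hom (Grp_ext_dihedral n1 (isT : (1 < 2)%N) (dvdnn 2))).
  have hG : [set: Extremal.gtype n 2 n.-1]%G \homg G by rewrite isoG; exact: homED.
  have cED := card_ext_dihedral n1 (isT : (1 < 2)%N) (dvdnn 2).
  have cardG : (n * 2 <= #|G|)%N.
    apply: dvdn_leq; first exact: cardG_gt0.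
    by have := card_homg hG; rewrite cED /= mul1n -mul2n mulnC.
  case/existsP: (isoGrp_hom isoG) => -[x y] /= /eqP[defG xn y2 xy].
  have xyN : x ^ y \in <[x]> by rewrite xy mem_cycle.
  have e : forall i : 'I_n, (\sum_(j < 2) #[x ^+ i * y ^+ j] = #[x ^+ i] + 2)%N.
    move=> i; rewrite big_ord_recl big_ord1 /= expg0 mulg1 expg1; congr (_ + _)%N.
    apply: ord2; first by rewrite sq_inv ?y2 // (@invx _ x y n n0 xn xy).
    by have := hneq (k:=2) n0 isT defG xn y2 xyN cardG i 1 (ltn_ord i) (isT : (1 < 2)%N) (orbT _); rewrite expg1.
  have sub : <[x]>%G \subset G by rewrite -defG joing_subl.
  have := psiD _ sub; rewrite (psiX (k:=2) n0 isT defG xn y2 xyN cardG) (psiG (k:=2) n0 isT defG xn y2 xyN cardG).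
  rewrite (eq_bigr _ (fun i _ => e i)) big_split sum_nat_const card_ord /=.
  rewrite (dvdn_addr _ (dvdnn _)).
  have xne : forall i, (0 < i < n)%N -> x ^+ i != 1.
    move=> i /andP[i0 ilt].
    by have := hneq (k:=2) n0 isT defG xn y2 xyN cardG i 0 ilt isT; rewrite i0 expg0 mulg1; apply.
  have [cop bnd] := @Sprops _ x p alpha n pp (erefl n) xn xne.
  rewrite Gauss_dvdr; last exact: coprimeXr.
  move/(dvdn_leq (isT : (0 < 2)%N)) => le2.
  have : (2 * 3 <= (n - 1) * p)%N by apply: leq_mul; lia.
  set S := (\sum_(i < n) _)%N in bnd le2 *. clearbody S n. lia.
- set n := (p ^ beta)%N in isoG.
  have n9 : (9 <= n)%N.
    apply: (@leq_trans (p ^ 2)); first by rewrite expnS expn1; have := leq_mul p3 p3.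
    by rewrite leq_exp2l // prime_gt1.
  have n0 : (0 < n)%N by lia.
  have n1 : (1 < n)%N by lia.
  have homED := @conv _ _ n 4 n0 (isoGrp_hom (Grp_ext_dihedral n1 (isT : (1 < 4)%N) (isT : (2 %| 4)%N))).
  have hG : [set: Extremal.gtype n 4 n.-1]%G \homg G by rewrite isoG; exact: homED.
  have cED := card_ext_dihedral n1 (isT : (1 < 4)%N) (isT : (2 %| 4)%N).
  have cardG : (n * 4 <= #|G|)%N.
    apply: dvdn_leq; first exact: cardG_gt0.
    have := card_homg hG; rewrite cED /=; rewrite -mul2n; congr (_ %| _)%N; lia.
  case/existsP: (isoGrp_hom isoG) => -[x y] /= /eqP[defG xn y4 xy].
  have xyN : x ^ y \in <[x]> by rewrite xy mem_cycle.
  have HN := hneq (k:=4) n0 isT defG xn y4 xyN cardG.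
  have iv := @invx _ x y n n0 xn xy.
  have y2n : y ^+ 2 != 1.
    by have := HN 0 2 n0 isT isT; rewrite expg0 mul1g.
  have y22 : (y ^+ 2) ^+ 2 = 1 by rewrite -expgM.
  have oddn : odd n by rewrite /n oddX op orbT.
  have e : forall i : 'I_n, (\sum_(j < 4) #[x ^+ i * y ^+ j] = #[x ^+ i] * 3 + 8)%N.
    move=> i; rewrite !big_ord_recl big_ord0 /= expg0 mulg1 expg1.
    have o1 : #[x ^+ i * y] = 4%N.
      have sq1 : (x ^+ i * y) ^+ 2 = y ^+ 2 by rewrite sq_inv ?iv.
      apply: ord4; first by rewrite sq1.
      by rewrite (_ : 4 = 2 * 2)%N // expgM sq1 y22.
    have iv3 : (x ^+ i) ^ (y ^+ 3) = (x ^+ i)^-1.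
      by rewrite !expgS expg0 mulg1 !conjgM iv conjVg iv invgK iv.
    have o3 : #[x ^+ i * y ^+ 3] = 4%N.
      have sq3 : (x ^+ i * y ^+ 3) ^+ 2 = y ^+ 2.
        by rewrite sq_inv // -expgM (_ : 3 * 2 = 4 + 2)%N // expgD y4 mul1g.
      apply: ord4; first by rewrite sq3.
      by rewrite (_ : 4 = 2 * 2)%N // expgM sq3 y22.
    have o2 : #[x ^+ i * y ^+ 2] = (#[x ^+ i] * 2)%N.
      have oy : #[y ^+ 2] = 2%N by apply: ord2.
      rewrite orderM.
      + by rewrite oy.
      + rewrite /commute conjgC; congr (_ * _).
        by rewrite expgS expg1 conjgM iv conjVg iv invgK.
      rewrite oy coprimen2; apply: (dvdn_odd _ oddn).
      by rewrite order_dvdn -expgnAC xn expg1n.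
    rewrite o1 o2 o3; lia.
  have sub : <[x]>%G \subset G by rewrite -defG joing_subl.
  have := psiD _ sub; rewrite (psiX (k:=4) n0 isT defG xn y4 xyN cardG) (psiG (k:=4) n0 isT defG xn y4 xyN cardG).
  rewrite (eq_bigr _ (fun i _ => e i)) big_split sum_nat_const card_ord /= -big_distrl /=.
  rewrite (dvdn_addr _ (dvdn_mulr _ (dvdnn _))).
  have xne : forall i, (0 < i < n)%N -> x ^+ i != 1.
    move=> i /andP[i0 ilt].
    by have := HN i 0 ilt isT; rewrite i0 expg0 mulg1; apply.
  have [cop bnd] := @Sprops _ x p beta n pp (erefl n) xn xne.
  rewrite Gauss_dvdr; last exact: coprimeXr.
  move/(dvdn_leq (isT : (0 < 8)%N)) => le8.
  have : (8 * 3 <= (n - 1) * p)%N by apply: leq_mul; lia.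
  set S := (\sum_(i < n) _)%N in bnd le8 *. clearbody S n. lia.
Qed.
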